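(* Consider $N$ sub-operators $\mathcal{R}^{[i]}$, $i\in\mathcal{V}=\{1,\dots,N\}$, each with $\mathcal{L}_2$-gain at most $\gamma^{[i]}>0$ (dissipative with respect to the supply $s^{[i]}$ in the context), interconnected via matrices $M_{vz},M_{vw},M_{uz}$ satisfying Assumption 2, and let $\gamma_R>0$. For each $i$, let $b^{[i]}\in\mathbb{R}$ be arbitrary and set $$\alpha^{[i]}=h^{[i]}+\max_{j\in\mathcal{A}_{z_i}}\Big(\sum_{k=1}^{q}|m_{kj}|\Big)+\big(b^{[i]}\big)^2,$$ assumed to be $>0$. Choose $$\gamma^{[i]}=\begin{cases}\left(\dfrac{1}{\alpha^{[i]}}\min\left\{\dfrac{\gamma_R^2}{\max_{j\in\mathcal{A}^1_{u_i}}\big(\sum_{k=1}^r|m_{jk}|\big)\gamma_R^2+1},\ \dfrac{1}{\max_{j\in\mathcal{A}^0_{u_i}}\big(\sum_{k=1}^r|m_{jk}|\big)}\right\}\right)^{1/2}, & i\in\mathcal{V}^1,\\[3ex] \left(\dfrac{1}{\alpha^{[i]}\max_{j\in\mathcal{A}^0_{u_i}}\big(\sum_{k=1}^r|m_{jk}|\big)}\right)^{1/2}, & i\notin\mathcal{V}^1,\end{cases}$$ where, for $i\in\mathcal{V}^1$ with $\mathcal{A}^0_{u_i}=\emptyset$ or with $\max_{j\in\mathcal{A}^0_{u_i}}\sum_k|m_{jk}|=0$, the second entry of the minimum is omitted, and for $i\notin\mathcal{V}^1$ it is assumed that $\max_{j\in\mathcal{A}^0_{u_i}}\sum_k|m_{jk}|>0$.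 Then, with these $\alpha^{[i]}$ and $\gamma^{[i]}$, the matrix inequality $$\begin{bmatrix} M_{vz} & M_{vw}\\ I & 0\\ 0 & I\\ M_{uz} & 0\end{bmatrix}^{\top}\begin{bmatrix}\mathrm{blkdiag}(\Pi_{N,v},-\Pi_{N,z}) & 0\\ 0 & -S\end{bmatrix}\begin{bmatrix} M_{vz} & M_{vw}\\ I & 0\\ 0 & I\\ M_{uz} & 0\end{bmatrix}\preceq 0$$ holds, for every choice of the free parameters $b^{[i]}$ (and of any further parameters of the sub-operators that do not affect their gain bound $\gamma^{[i]}$). Consequently the interconnected operator $\mathcal{R}:\widehat{\mathbf{w}}\mapsto\mathbf{u}$ (assumed well posed) lies in $\mathcal{L}_2$, with $\mathcal{L}_2$-gain at most $\gamma_R$.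
   Context: Sub-operators: $\mathcal{R}^{[i]}:l^{q_i}\to l^{r_i}$ with state-space form $\xi^{[i]}_{t+1}=\rho^{[i]}(\xi^{[i]}_t,v^{[i]}_t)$, $z^{[i]}_t=\chi^{[i]}(\xi^{[i]}_t,v^{[i]}_t)$, having $\mathcal{L}_2$-gain at most $\gamma^{[i]}$ in the sense that there is a nonnegative storage function $V^{[i]}$ with $V^{[i]}(\xi^{[i]}_{t+1})-V^{[i]}(\xi^{[i]}_t)\le \gamma^{[i]2}|v^{[i]}_t|^2-|z^{[i]}_t|^2$ for all $t$. (In the paper these are Recurrent Equilibrium Networks, whose parametrization guarantees gain at most any prescribed $\gamma^{[i]}$ for all values of their parameters.) Stacked signals: $v=\mathrm{col}(v^{[1]},\dots,v^{[N]})\in\mathbb{R}^q$, $z=\mathrm{col}(z^{[1]},\dots,z^{[N]})\in\mathbb{R}^r$, $\widehat{w}\in\mathbb{R}^n$, $u\in\mathbb{R}^m$, interconnected by $v=M_{vz}z+M_{vw}\widehat{w}$, $u=M_{uz}z$, with $M_{vz}\in\mathbb{R}^{q\times r}$, $M_{vw}\in\mathbb{R}^{q\times n}$, $M_{uz}\in\mathbb{R}^{m\times r}$. An operator is in $\mathcal{L}_2$ if it is causal and maps square-summable sequences to square-summable sequences. Assumption 2: (a) there is a permutation matrix $C\in\{0,1\}^{q\times q}$ with $CM_{vw}=\begin{bmatrix}I_n\\ 0_{(q-n)\times n}\end{bmatrix}$; (b) $M_{uz}^\top M_{uz}=H=\mathrm{diag}(h)$ for some $h\in\mathbb{R}^r$.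 Notation: $m_{jk}$ denotes the $(j,k)$ entry of $M_{vz}$. $\mathcal{A}_{u_i}\subseteq\{1,\dots,q\}$ is the set of indices of the components of $v$ forming $v^{[i]}$; $\mathcal{A}_{z_i}\subseteq\{1,\dots,r\}$ is the set of indices of the components of $z$ forming $z^{[i]}$. $\mathcal{A}^1_{u_i}=\{k\in\mathcal{A}_{u_i}:(M_{vw}\mathbf{1})_k=1\}$ and $\mathcal{A}^0_{u_i}=\{k\in\mathcal{A}_{u_i}:(M_{vw}\mathbf{1})_k=0\}$, where $\mathbf{1}$ is the all-ones vector. $\mathcal{V}^1=\{i\in\mathcal{V}:\mathcal{A}^1_{u_i}\neq\emptyset\}$ (the out-connected sub-operators). $h^{[i]}=\max_{j\in\mathcal{A}_{z_i}}h_j$. $S=\mathrm{blkdiag}(\gamma_R^2I_n,-I_m)$, $\Pi_{N,v}=\mathrm{blkdiag}(\alpha^{[1]}\gamma^{[1]2}I_{q_1},\dots,\alpha^{[N]}\gamma^{[N]2}I_{q_N})$, $\Pi_{N,z}=\mathrm{blkdiag}(\alpha^{[1]}I_{r_1},\dots,\alpha^{[N]}I_{r_N})$. *)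

(* Defs.v *)
From mathcomp Require Import all_boot all_order all_algebra.
Set Implicit Arguments. Unset Strict Implicit. Unset Printing Implicit Defensive.
Import Order.TTheory GRing.Theory Num.Theory.
Local Open Scope ring_scope.

Definition nsd {R : numDomainType} {k : nat} (A : 'M[R]_k) : Prop :=
  forall x : 'cV[R]_k, (x^T *m A *m x) 0 0 <= 0.

Definition sqnorm {R : numDomainType} {k : nat} (x : 'cV[R]_k) : R :=
  \sum_(i < k) x i 0 ^+ 2.

(* maximum of F over the elements satisfying P; 0 if there are none
   (all maxima used below are maxima of nonnegative quantities). *)
Definition bmax {R : realDomainType} {I : finType} (P : pred I) (F : I -> R) : R :=
  \big[Num.max/0]_(i | P i) F i.

(* Components of v are assigned to sub-operators by blkv : 'I_q -> 'I_N
   (A_{u_i} = {k | blkv k = i}); components of z by blkz : 'I_r -> 'I_N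
   (A_{z_i} = {j | blkz j = i}). *)

Definition Mw1 {R : realDomainType} {q n : nat} (Mvw : 'M[R]_(q, n)) (k : 'I_q) : R :=
  \sum_(l < n) Mvw k l.

Definition colabs {R : realDomainType} {q r : nat} (Mvz : 'M[R]_(q, r)) (j : 'I_r) : R :=
  \sum_(k < q) `|Mvz k j|.

Definition rowabs {R : realDomainType} {q r : nat} (Mvz : 'M[R]_(q, r)) (j : 'I_q) : R :=
  \sum_(k < r) `|Mvz j k|.

Definition alpha {R : realDomainType} {N q r : nat} (blkz : 'I_r -> 'I_N)
  (Mvz : 'M[R]_(q, r)) (h : 'rV[R]_r) (b : 'I_N -> R) (i : 'I_N) : R :=
  bmax (fun j => blkz j == i) (fun j => h 0 j)
  + bmax (fun j => blkz j == i) (colabs Mvz) + b i ^+ 2.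

Definition inV1 {R : realDomainType} {N q n : nat} (blkv : 'I_q -> 'I_N)
  (Mvw : 'M[R]_(q, n)) (i : 'I_N) : bool :=
  [exists k, (blkv k == i) && (Mw1 Mvw k == 1)].

Definition amax1 {R : realDomainType} {N q r n : nat} (blkv : 'I_q -> 'I_N)
  (Mvz : 'M[R]_(q, r)) (Mvw : 'M[R]_(q, n)) (i : 'I_N) : R :=
  bmax (fun k => (blkv k == i) && (Mw1 Mvw k == 1)) (rowabs Mvz).

Definition amax0 {R : realDomainType} {N q r n : nat} (blkv : 'I_q -> 'I_N)
  (Mvz : 'M[R]_(q, r)) (Mvw : 'M[R]_(q, n)) (i : 'I_N) : R :=
  bmax (fun k => (blkv k == i) && (Mw1 Mvw k == 0)) (rowabs Mvz).

Definition gamma {R : rcfType} {N q r n : nat} (blkv : 'I_q -> 'I_N) (blkz : 'I_r -> 'I_N)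
  (Mvz : 'M[R]_(q, r)) (Mvw : 'M[R]_(q, n)) (h : 'rV[R]_r) (b : 'I_N -> R)
  (gR : R) (i : 'I_N) : R :=
  let a := alpha blkz Mvz h b i in
  let a1 := amax1 blkv Mvz Mvw i in
  let a0 := amax0 blkv Mvz Mvw i in
  Num.sqrt
    (if inV1 blkv Mvw i then
       a^-1 * (if 0 < a0 then Num.min (gR ^+ 2 / (a1 * gR ^+ 2 + 1)) a0^-1
               else gR ^+ 2 / (a1 * gR ^+ 2 + 1))
     else (a * a0)^-1).

Definition Piv {R : rcfType} {N q r n : nat} (blkv : 'I_q -> 'I_N) (blkz : 'I_r -> 'I_N)
  (Mvz : 'M[R]_(q, r)) (Mvw : 'M[R]_(q, n)) (h : 'rV[R]_r) (b : 'I_N -> R) (gR : R)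
  : 'M[R]_q :=
  diag_mx (\row_k (alpha blkz Mvz h b (blkv k)
                    * gamma blkv blkz Mvz Mvw h b gR (blkv k) ^+ 2)).

Definition Piz {R : rcfType} {N q r : nat} (blkz : 'I_r -> 'I_N)
  (Mvz : 'M[R]_(q, r)) (h : 'rV[R]_r) (b : 'I_N -> R) : 'M[R]_r :=
  diag_mx (\row_j alpha blkz Mvz h b (blkz j)).

Definition Smx {R : ringType} (n m : nat) (gR : R) : 'M[R]_(n + m) :=
  block_mx (gR ^+ 2)%:M 0 0 (- 1%:M).

Definition Mbig {R : ringType} {q r n m : nat} (Mvz : 'M[R]_(q, r)) (Mvw : 'M[R]_(q, n))
  (Muz : 'M[R]_(m, r)) : 'M[R]_((q + r) + (n + m), r + n) :=
  col_mx (col_mx (row_mx Mvz Mvw) (row_mx 1%:M 0))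
         (col_mx (row_mx 0 1%:M) (row_mx Muz 0)).

Definition LMImx {R : rcfType} {N q r n m : nat} (blkv : 'I_q -> 'I_N) (blkz : 'I_r -> 'I_N)
  (Mvz : 'M[R]_(q, r)) (Mvw : 'M[R]_(q, n)) (Muz : 'M[R]_(m, r)) (h : 'rV[R]_r)
  (b : 'I_N -> R) (gR : R) : 'M[R]_(r + n) :=
  (Mbig Mvz Mvw Muz)^T
  *m block_mx (block_mx (Piv blkv blkz Mvz Mvw h b gR) 0 0 (- Piz blkz Mvz h b)) 0
              0 (- Smx n m gR)
  *m Mbig Mvz Mvw Muz.

(* v^[i], zero-padded: the components of a in A_{u_i}, other components set to 0 *)
Definition resv {R : ringType} {N q : nat} (blkv : 'I_q -> 'I_N) (i : 'I_N)
  (a : 'cV[R]_q) : 'cV[R]_q :=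
  \col_k (if blkv k == i then a k 0 else 0).

Definition sqnorm_blk {R : numDomainType} {N k : nat} (blk : 'I_k -> 'I_N) (i : 'I_N)
  (a : 'cV[R]_k) : R :=
  \sum_(l < k | blk l == i) a l 0 ^+ 2.

(* Main.v *)
Require Import Defs.
From mathcomp Require Import all_boot all_order all_algebra.
From mathcomp Require Import ring lra perm.
Import Order.TTheory GRing.Theory Num.Theory.
Local Open Scope ring_scope.

Lemma sumind_in (R : pzRingType) (n : nat) (j : 'I_n) (c : 'I_n -> R) :
  \sum_(i < n) ((i : nat) == j)%:R * c i = c j.
Proof.
rewrite (bigD1 j) //= eqxx mul1r big1 ?addr0 // => i Hi.
by case: eqP => [/val_inj Hia|]; [move: Hi; rewrite Hia eqxx | rewrite mul0r].
Qed.

Lemma sumind_out (R : pzRingType) (n a : nat) (c : 'I_n -> R) :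
  (n <= a)%N -> \sum_(i < n) ((i : nat) == a)%:R * c i = 0.
Proof.
move=> Ha; rewrite big1 // => i _; case: eqP => [Hia|]; last by rewrite mul0r.
by move: (ltn_ord i); rewrite Hia ltnNge Ha.
Qed.

Lemma bmax_ge (R : realDomainType) (I : finType) (P : pred I) (F : I -> R) j :
  P j -> F j <= bmax P F.
Proof.
rewrite /bmax => Pj.
have : j \in index_enum I by rewrite mem_index_enum.
elim: (index_enum I) => [|a s IH] //=; rewrite in_cons big_cons.
case/orP => [/eqP <-|Hs]; first by rewrite Pj le_max lexx.
case: ifP => _; last exact: IH.
by rewrite le_max IH ?orbT.
Qed.

Lemma bmax_ge0 (R : realDomainType) (I : finType) (P : pred I) (F : I -> R) :
  0 <= bmax P F.
Proof.
rewrite /bmax; elim: (index_enum I) => [|a s IH]; first by rewrite big_nil.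
by rewrite big_cons; case: ifP => _ //; rewrite le_max IH orbT.
Qed.

Lemma cs0 (R : realFieldType) (n : nat) (a c : 'I_n -> R) :
  (forall i, 0 <= a i) ->
  (\sum_i a i * c i) ^+ 2 <= (\sum_i a i) * (\sum_i a i * c i ^+ 2).
Proof.
move=> Ha.
set A := \sum_i a i; set B := \sum_i a i * c i; set S := \sum_i a i * c i ^+ 2.
have HA : 0 <= A by apply: sumr_ge0 => i _.
have E : \sum_i a i * (c i * A - B) ^+ 2 = A * (A * S - B ^+ 2).
  have -> : \sum_i a i * (c i * A - B) ^+ 2 =
    \sum_i (A ^+ 2 * (a i * c i ^+ 2) - (2 * A * B) * (a i * c i) + B ^+ 2 * a i).
    by apply: eq_bigr => i _; ring.
  rewrite big_split sumrB /= -!mulr_sumr -/A -/B -/S; ring.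
have H0 : 0 <= A * (A * S - B ^+ 2).
  by rewrite -E; apply: sumr_ge0 => i _; rewrite mulr_ge0 ?sqr_ge0.
have [HA0|HAp] := eqVneq A 0.
  have Hz : forall i, a i = 0.
    by move=> i; apply: (psumr_eq0P (fun j _ => Ha j) HA0).
  rewrite HA0 mul0r /B big1 ?expr0n //= => i _; by rewrite Hz mul0r.
have HAp' : 0 < A by rewrite lt_def HAp HA.
rewrite -subr_ge0; move: H0; rewrite pmulr_rge0 //.
Qed.

Lemma cs (R : realFieldType) (n : nat) (m z : 'I_n -> R) :
  (\sum_i m i * z i) ^+ 2 <= (\sum_i `|m i|) * (\sum_i `|m i| * z i ^+ 2).
Proof.
have H1 : (\sum_i m i * z i) ^+ 2 <= (\sum_i `|m i| * `|z i|) ^+ 2.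
  rewrite -[X in X <= _]ger0_norm ?sqr_ge0 // normrX lerXn2r ?nnegrE //.
    by apply: sumr_ge0 => i _; rewrite mulr_ge0.
  by apply: le_trans (ler_norm_sum _ _ _) _; apply: ler_sum => i _; rewrite normrM.
apply: le_trans H1 _.
have -> : \sum_i `|m i| * z i ^+ 2 = \sum_i `|m i| * `|z i| ^+ 2.
  by apply: eq_bigr => i _; rewrite real_normK ?num_real.
by apply: cs0.
Qed.

Lemma qblk (R : comPzRingType) (k1 k2 : nat) (a : 'cV[R]_k1) (b : 'cV[R]_k2)
  (A : 'M_k1) (B : 'M_k2) :
  (col_mx a b)^T *m block_mx A 0 0 B *m col_mx a b = a^T *m A *m a + b^T *m B *m b.
Proof.
by rewrite tr_col_mx mul_row_block !mulmx0 addr0 add0r mul_row_col.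
Qed.

Lemma qdiag (R : comPzRingType) (k : nat) (a : 'cV[R]_k) (d : 'rV[R]_k) :
  (a^T *m diag_mx d *m a) 0 0 = \sum_i d 0 i * a i 0 ^+ 2.
Proof.
rewrite mul_mx_diag mxE; apply: eq_bigr => i _; rewrite !mxE; ring.
Qed.

Lemma qscal (R : comPzRingType) (k : nat) (a : 'cV[R]_k) (c : R) :
  (a^T *m c%:M *m a) 0 0 = c * \sum_i a i 0 ^+ 2.
Proof.
rewrite mul_mx_scalar -scalemxAl !mxE !mulr_sumr; apply: eq_bigr => i _; by rewrite !mxE expr2.
Qed.

Lemma qdiag' (R : comPzRingType) (k : nat) (a : 'cV[R]_k) (d : 'rV[R]_k) :
  \sum_j (a^T *m diag_mx d) 0 j * a j 0 = \sum_i d 0 i * a i 0 ^+ 2.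
Proof. by rewrite -qdiag [RHS]mxE. Qed.

Lemma qscal' (R : comPzRingType) (k : nat) (a : 'cV[R]_k) (c : R) :
  \sum_j (a^T *m c%:M) 0 j * a j 0 = c * \sum_i a i 0 ^+ 2.
Proof. by rewrite -qscal [RHS]mxE. Qed.

Lemma sqnormE (R : numDomainType) (k : nat) (a : 'cV[R]_k) :
  sqnorm a = (a^T *m a) 0 0.
Proof. by rewrite /sqnorm mxE; apply: eq_bigr => i _; rewrite !mxE expr2. Qed.

Lemma LMIexp (R : rcfType) (N q r n m : nat)
  (blkv : 'I_q -> 'I_N) (blkz : 'I_r -> 'I_N)
  (Mvz : 'M[R]_(q, r)) (Mvw : 'M[R]_(q, n)) (Muz : 'M[R]_(m, r))
  (h : 'rV[R]_r) (b : 'I_N -> R) (gR : R)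
  (HH : Muz^T *m Muz = diag_mx h) (zeta : 'cV[R]_r) (w : 'cV[R]_n) :
  ((col_mx zeta w)^T *m LMImx blkv blkz Mvz Mvw Muz h b gR *m col_mx zeta w) 0 0 =
  \sum_k (alpha blkz Mvz h b (blkv k) * gamma blkv blkz Mvz Mvw h b gR (blkv k) ^+ 2)
           * (Mvz *m zeta + Mvw *m w) k 0 ^+ 2
  - \sum_j alpha blkz Mvz h b (blkz j) * zeta j 0 ^+ 2
  - (gR ^+ 2 * \sum_l w l 0 ^+ 2 - \sum_j h 0 j * zeta j 0 ^+ 2).
Proof.
rewrite /LMImx !mulmxA -trmx_mul -!mulmxA mulmxA.
rewrite /Mbig !mul_col_mx !mul_row_col !mul1mx !mul0mx addr0 add0r.
rewrite addr0.
rewrite (@qblk _ _ _ (col_mx (Mvz *m zeta + Mvw *m w) zeta) (col_mx w (Muz *m zeta))).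
rewrite (@qblk _ _ _ (Mvz *m zeta + Mvw *m w) zeta).
rewrite /Smx opp_block_mx !oppr0 opprK.
rewrite (@qblk _ _ _ w (Muz *m zeta)).
rewrite mulmx1 trmx_mul -!mulmxA (mulmxA Muz^T) HH !mulmxA.
rewrite !mulmxN !mulNmx.
rewrite !mxE /Piv /Piz !qdiag' qscal'.
rewrite (eq_bigr (fun i => alpha blkz Mvz h b (blkv i) *
   gamma blkv blkz Mvz Mvw h b gR (blkv i) ^+ 2 * (Mvz *m zeta + Mvw *m w) i 0 ^+ 2));
  last by move=> i _; rewrite mxE.
rewrite [X in _ - X + _](eq_bigr (fun i => alpha blkz Mvz h b (blkz i) * zeta i 0 ^+ 2));
  last by move=> i _; rewrite mxE.
by rewrite opprB addrC.
Qed.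

Lemma scalA (R : realFieldType) (p c y S : R) :
  0 <= p -> p * c <= 1 -> y ^+ 2 <= c * S -> 0 <= S -> p * y ^+ 2 <= S.
Proof. move=> *; nra. Qed.

Lemma scalB (R : realFieldType) (p c a1 g2 y S W : R) :
  0 <= c -> c <= a1 -> 0 < g2 -> y ^+ 2 <= c * S -> 0 <= S -> 0 <= p ->
  p * (a1 * g2 + 1) <= g2 -> p * (y + W) ^+ 2 <= S + g2 * W ^+ 2.
Proof.
move=> Hc Hca Hg Hy HS Hp Hpa.
have Hpc : p * c * g2 <= p * a1 * g2.
  by apply: ler_wpM2r; [exact: ltW | exact: ler_wpM2l].
have HD : 0 <= g2 - p - p * c * g2.
  have : p * (a1 * g2 + 1) = p * a1 * g2 + p by ring.
  lra.
have [Hc0|Hcp] := eqVneq c 0.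
  have Hy0 : y = 0.
    apply/eqP; rewrite -sqrf_eq0 eq_le sqr_ge0 andbT.
    by move: Hy; rewrite Hc0 mul0r.
  rewrite Hy0 add0r.
  have Hpg : p <= g2 by move: HD; rewrite Hc0 mulr0 mul0r subr0 subr_ge0.
  have : p * W ^+ 2 <= g2 * W ^+ 2 by apply: ler_wpM2r; rewrite ?sqr_ge0.
  lra.
have Hcp' : 0 < c by rewrite lt_def Hcp Hc.
have HA : 0 < 1 - p * c.
  have : p * c * g2 <= g2 - p by nra.
  case: (eqVneq p 0) => [->|Hp0]; first by move=> _; rewrite mul0r subr0 ltr01.
  have Hpp : 0 < p by rewrite lt_def Hp0 Hp.
  nra.
set A := 1 - p * c.
have E : A * c * (S + g2 * W ^+ 2 - p * (y + W) ^+ 2) =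
  A * (c * S - y ^+ 2) + (A * y - p * c * W) ^+ 2 + p * c ^+ 2 * (g2 - p - p * c * g2) * W ^+ 2
  + A * c * (g2 - p - p * c * g2) * W ^+ 2 by rewrite /A; ring.
have H0 : 0 <= A * c * (S + g2 * W ^+ 2 - p * (y + W) ^+ 2).
  rewrite E; apply: addr_ge0; [apply: addr_ge0; [apply: addr_ge0|]|].
  - by apply: mulr_ge0; [exact: ltW | rewrite subr_ge0].
  - exact: sqr_ge0.
  - by apply: mulr_ge0 => //; [apply: mulr_ge0 => //; apply: mulr_ge0 => //; exact: sqr_ge0 | exact: sqr_ge0].
  - by apply: mulr_ge0 => //; [apply: mulr_ge0 => //; apply: mulr_ge0 => //; exact: ltW | exact: sqr_ge0].
rewrite -subr_ge0; move: H0; rewrite pmulr_rge0 // mulr_gt0 //.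
Qed.

Lemma Mvw_struct (R : numDomainType) (q n : nat) (Mvw : 'M[R]_(q, n)) :
  (exists C : 'M[R]_q, is_perm_mx C /\
          C *m Mvw = \matrix_(k < q, l < n) (nat_of_ord k == nat_of_ord l)%:R) ->
  exists s : 'S_q, forall k l, Mvw (s k) l = ((k : nat) == (l : nat))%:R.
Proof.
case=> C [/is_perm_mxP [s ->] HCM]; exists s => k l.
move/matrixP: HCM => /(_ k l); rewrite -row_permE !mxE => ->.
by [].
Qed.

Lemma rowb (R : rcfType) (N q r n : nat)
  (blkv : 'I_q -> 'I_N) (blkz : 'I_r -> 'I_N)
  (Mvz : 'M[R]_(q, r)) (Mvw : 'M[R]_(q, n))
  (h : 'rV[R]_r) (b : 'I_N -> R) (gR : R) (s : 'S_q)
  (Hs : forall k l, Mvw (s k) l = ((k : nat) == (l : nat))%:R)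
  (HgR : 0 < gR)
  (Halpha : forall i, 0 < alpha blkz Mvz h b i)
  (Ha0 : forall i, ~~ inV1 blkv Mvw i -> 0 < amax0 blkv Mvz Mvw i)
  (zeta : 'cV[R]_r) (w : 'cV[R]_n) (k : 'I_q) :
  (alpha blkz Mvz h b (blkv k) * gamma blkv blkz Mvz Mvw h b gR (blkv k) ^+ 2)
     * (Mvz *m zeta + Mvw *m w) k 0 ^+ 2
  <= \sum_j `|Mvz k j| * zeta j 0 ^+ 2 + gR ^+ 2 * (Mvw *m w) k 0 ^+ 2.
Proof.
set k' := (s^-1)%g k.
have Hk : k = s k' by rewrite /k' permKV.
have HW : (Mvw *m w) k 0 = \sum_(l < n) ((l : nat) == k')%:R * w l 0.
  by rewrite mxE; apply: eq_bigr => l _; rewrite Hk Hs eq_sym.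
have HM1 : Mw1 Mvw k = \sum_(l < n) ((l : nat) == k')%:R * 1.
  by rewrite /Mw1; apply: eq_bigr => l _; rewrite Hk Hs eq_sym mulr1.
set y := (Mvz *m zeta) k 0.
have Hv : (Mvz *m zeta + Mvw *m w) k 0 = y + (Mvw *m w) k 0 by rewrite mxE.
have Hy : y ^+ 2 <= rowabs Mvz k * \sum_j `|Mvz k j| * zeta j 0 ^+ 2.
  by rewrite /y mxE /rowabs; apply: cs.
have HS : 0 <= \sum_j `|Mvz k j| * zeta j 0 ^+ 2.
  by apply: sumr_ge0 => j _; rewrite mulr_ge0 ?sqr_ge0.
have Hc : 0 <= rowabs Mvz k by apply: sumr_ge0.
set i := blkv k.
have Ha := Halpha i.
set a := alpha blkz Mvz h b i.
set a1 := amax1 blkv Mvz Mvw i.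
set a0 := amax0 blkv Mvz Mvw i.
have Ha1 : 0 <= a1 by apply: bmax_ge0.
have Ha0' : 0 <= a0 by apply: bmax_ge0.
have Hg2 : 0 < gR ^+ 2 by rewrite exprn_gt0.
have HT : 0 <= gR ^+ 2 / (a1 * gR ^+ 2 + 1).
  apply: divr_ge0; [exact: ltW|]; apply: addr_ge0 => //; apply: mulr_ge0 => //; exact: ltW.
rewrite Hv.
case: (ltnP k' n) => Hkn.
-
  have HM1' : Mw1 Mvw k = 1 by rewrite HM1 (@sumind_in _ _ (Ordinal Hkn)).
  have HV1 : inV1 blkv Mvw i by apply/existsP; exists k; rewrite eqxx HM1' eqxx.
  have Hca : rowabs Mvz k <= a1 by apply: bmax_ge; rewrite eqxx HM1' eqxx.
  rewrite /gamma -/a -/a1 -/a0 HV1.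
  set X := (if 0 < a0 then _ else _).
  have HX0 : 0 <= X by rewrite /X; case: ifP => _ //; rewrite le_min HT invr_ge0 Ha0'.
  have HXT : X <= gR ^+ 2 / (a1 * gR ^+ 2 + 1).
    by rewrite /X; case: ifP => _ //; rewrite ge_min lexx.
  rewrite sqr_sqrtr; last by rewrite mulr_ge0 // invr_ge0 ltW.
  have -> : a * (a^-1 * X) = X by rewrite mulrA mulfV ?gt_eqF // mul1r.
  apply: (@scalB R X (rowabs Mvz k) a1 (gR ^+ 2) y _ ((Mvw *m w) k 0) Hc Hca Hg2 Hy HS HX0).
  rewrite -ler_pdivlMr //.
  by apply: ltr_pwDr; [exact: ltr01 | apply: mulr_ge0 => //; exact: ltW].
-
  have HM0 : Mw1 Mvw k = 0 by rewrite HM1 (@sumind_out _ n k').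
  have HW0 : (Mvw *m w) k 0 = 0 by rewrite HW (@sumind_out _ n k').
  have Hca : rowabs Mvz k <= a0 by apply: bmax_ge; rewrite eqxx HM0 eqxx.
  rewrite HW0 addr0 expr0n mulr0 addr0.
  apply: (@scalA _ _ (rowabs Mvz k)) => //.
  + by apply: mulr_ge0; [exact: ltW | exact: sqr_ge0].
  + rewrite /gamma -/a -/a1 -/a0; case: ifP => HV.
    * set X := (if 0 < a0 then _ else _).
      have HX0 : 0 <= X by rewrite /X; case: ifP => _ //; rewrite le_min HT invr_ge0 Ha0'.
      rewrite sqr_sqrtr; last by rewrite mulr_ge0 // invr_ge0 ltW.
      have -> : a * (a^-1 * X) = X by rewrite mulrA mulfV ?gt_eqF // mul1r.
      rewrite /X; case: ifP => Hpos.
      - apply: (le_trans (y := a0^-1 * rowabs Mvz k)).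
          by apply: ler_wpM2r => //; rewrite ge_min lexx orbT.
        by rewrite mulrC -ler_pdivlMr // ?invr_gt0 // div1r invrK.
      - have Hz : a0 = 0 by apply/eqP; rewrite eq_le Ha0' andbT leNgt Hpos.
        have Hc0 : rowabs Mvz k = 0 by apply/eqP; rewrite eq_le Hc andbT -Hz.
        by rewrite Hc0 mulr0 ler01.
    * have Hp : 0 < a0 by apply: Ha0; rewrite HV.
      rewrite sqr_sqrtr; last by rewrite invr_ge0 mulr_ge0 // ltW.
      rewrite invfM mulrA mulfV ?gt_eqF // mul1r.
      by rewrite mulrC -ler_pdivlMr // ?invr_gt0 // div1r invrK.
Qed.

Lemma sumind_le1 (R : numDomainType) (n a : nat) :
  \sum_(i < n) ((i : nat) == a)%:R <= 1 :> R.
Proof.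
have -> : \sum_(i < n) ((i : nat) == a)%:R = \sum_(i < n) ((i : nat) == a)%:R * (1 : R).
  by apply: eq_bigr => i _; rewrite mulr1.
case: (ltnP a n) => Ha.
  by rewrite (@sumind_in _ _ (Ordinal Ha)).
by rewrite (@sumind_out _ n a) // ler01.
Qed.

Lemma core (R : rcfType) (N q r n : nat)
  (blkv : 'I_q -> 'I_N) (blkz : 'I_r -> 'I_N)
  (Mvz : 'M[R]_(q, r)) (Mvw : 'M[R]_(q, n))
  (h : 'rV[R]_r) (b : 'I_N -> R) (gR : R)
  (HC : exists C : 'M[R]_q, is_perm_mx C /\
          C *m Mvw = \matrix_(k < q, l < n) (nat_of_ord k == nat_of_ord l)%:R)
  (HgR : 0 < gR)
  (Halpha : forall i, 0 < alpha blkz Mvz h b i)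
  (Ha0 : forall i, ~~ inV1 blkv Mvw i -> 0 < amax0 blkv Mvz Mvw i)
  (zeta : 'cV[R]_r) (w : 'cV[R]_n) :
  \sum_k (alpha blkz Mvz h b (blkv k) * gamma blkv blkz Mvz Mvw h b gR (blkv k) ^+ 2)
           * (Mvz *m zeta + Mvw *m w) k 0 ^+ 2
  + \sum_j h 0 j * zeta j 0 ^+ 2
  <= \sum_j alpha blkz Mvz h b (blkz j) * zeta j 0 ^+ 2 + gR ^+ 2 * \sum_l w l 0 ^+ 2.
Proof.
have [s Hs] := Mvw_struct _ _ _ Mvw HC.
have S1 : \sum_k (alpha blkz Mvz h b (blkv k) * gamma blkv blkz Mvz Mvw h b gR (blkv k) ^+ 2)
           * (Mvz *m zeta + Mvw *m w) k 0 ^+ 2 <=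
   \sum_k (\sum_j `|Mvz k j| * zeta j 0 ^+ 2 + gR ^+ 2 * (Mvw *m w) k 0 ^+ 2).
  by apply: ler_sum => k _; exact: (rowb _ _ _ _ _ _ _ _ _ _ _ _ _ Hs HgR Halpha Ha0 zeta w k).
rewrite big_split /= -mulr_sumr in S1.
have S2 : \sum_k \sum_j `|Mvz k j| * zeta j 0 ^+ 2 = \sum_j colabs Mvz j * zeta j 0 ^+ 2.
  by rewrite exchange_big; apply: eq_bigr => j _; rewrite /colabs mulr_suml.
have S3 : \sum_k (Mvw *m w) k 0 ^+ 2 <= \sum_l w l 0 ^+ 2.
  rewrite (reindex_inj (@perm_inj _ s)) /=.
  have E : forall k, (Mvw *m w) (s k) 0 ^+ 2 = \sum_(l < n) ((l : nat) == k)%:R * w l 0 ^+ 2.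
    move=> k; rewrite mxE.
    have -> : \sum_j Mvw (s k) j * w j 0 = \sum_(l < n) ((l : nat) == k)%:R * w l 0.
      by apply: eq_bigr => l _; rewrite Hs eq_sym.
    case: (ltnP k n) => Hk.
      by rewrite !(@sumind_in _ _ (Ordinal Hk)).
    by rewrite !(@sumind_out _ n k) // expr0n.
  rewrite (eq_bigr _ (fun k _ => E k)) exchange_big /=.
  apply: ler_sum => l _; rewrite -mulr_suml.
  rewrite -[X in _ <= X]mul1r; apply: ler_wpM2r; first exact: sqr_ge0.
  have -> : \sum_(i < q) ((l : nat) == i)%:R = \sum_(i < q) ((i : nat) == l)%:R :> R.
    by apply: eq_bigr => i _; rewrite eq_sym.
  exact: sumind_le1.
have S4 : \sum_j colabs Mvz j * zeta j 0 ^+ 2 + \sum_j h 0 j * zeta j 0 ^+ 2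
          <= \sum_j alpha blkz Mvz h b (blkz j) * zeta j 0 ^+ 2.
  rewrite -big_split; apply: ler_sum => j _ /=; rewrite -mulrDl.
  apply: ler_wpM2r; first exact: sqr_ge0.
  rewrite /alpha.
  set Bh := bmax _ _. set Bc := bmax _ _.
  have Hh : h 0 j <= Bh by apply: bmax_ge.
  have Hc : colabs Mvz j <= Bc by apply: bmax_ge.
  have := sqr_ge0 (b (blkz j)).
  lra.
have S5 : gR ^+ 2 * \sum_k (Mvw *m w) k 0 ^+ 2 <= gR ^+ 2 * \sum_l w l 0 ^+ 2.
  by apply: ler_wpM2l => //; exact: sqr_ge0.
rewrite S2 in S1.
lra.
Qed.

Lemma part_sum (R : nmodType) (I J : finType) (p : I -> J) (F : I -> R) (G : J -> I -> R) :
  (forall i j, p i = j -> G j i = F i) ->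
  \sum_j \sum_(i | p i == j) G j i = \sum_i F i.
Proof.
move=> HG; rewrite (partition_big p predT) //=; apply: eq_bigr => j _.
by apply: eq_bigr => i /eqP Hi; apply: HG.
Qed.

Theorem theorem1 (R : rcfType) (N q r n m : nat)
  (blkv : 'I_q -> 'I_N) (blkz : 'I_r -> 'I_N)
  (Mvz : 'M[R]_(q, r)) (Mvw : 'M[R]_(q, n)) (Muz : 'M[R]_(m, r))
  (h : 'rV[R]_r) (b : 'I_N -> R) (gR : R)
  (* Assumption 2 (a) *)
  (HC : exists C : 'M[R]_q, is_perm_mx C /\
          C *m Mvw = \matrix_(k < q, l < n) (nat_of_ord k == nat_of_ord l)%:R)
  (* Assumption 2 (b) *)
  (HH : Muz^T *m Muz = diag_mx h)
  (HgR : 0 < gR)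
  (Halpha : forall i, 0 < alpha blkz Mvz h b i)
  (Ha0 : forall i, ~~ inV1 blkv Mvw i -> 0 < amax0 blkv Mvz Mvw i)
  (* sub-operators in state-space form, dissipative with gain gamma^[i] *)
  (X : 'I_N -> Type)
  (rho : forall i, X i -> 'cV[R]_q -> X i)
  (chi : forall i, X i -> 'cV[R]_q -> 'cV[R]_r)
  (V : forall i, X i -> R)
  (HV0 : forall i x, 0 <= V i x)
  (HVdiss : forall i (x : X i) (a : 'cV[R]_q),
     V i (rho i x (resv blkv i a)) - V i x
       <= gamma blkv blkz Mvz Mvw h b gR i ^+ 2 * sqnorm_blk blkv i a
          - sqnorm_blk blkz i (chi i x (resv blkv i a))) :
  nsd (LMImx blkv blkz Mvz Mvw Muz h b gR)
  /\
  exists beta : (forall i, X i) -> R,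
    forall (w : nat -> 'cV[R]_n) (xi : forall i, nat -> X i)
           (v : nat -> 'cV[R]_q) (z : nat -> 'cV[R]_r) (u : nat -> 'cV[R]_m),
      (forall i t, xi i t.+1 = rho i (xi i t) (resv blkv i (v t))) ->
      (forall t j, z t j 0 =
         chi (blkz j) (xi (blkz j) t) (resv blkv (blkz j) (v t)) j 0) ->
      (forall t, v t = Mvz *m z t + Mvw *m w t) ->
      (forall t, u t = Muz *m z t) ->
      forall T : nat,
        \sum_(t < T) sqnorm (u t)
          <= gR ^+ 2 * \sum_(t < T) sqnorm (w t) + beta (fun i => xi i 0%N).
Proof.
have Hcore := core _ _ _ _ _ blkv blkz Mvz Mvw h b gR HC HgR Halpha Ha0.
split.
  move=> x; rewrite -(vsubmxK x) LMIexp //.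
  have := Hcore (usubmx x) (dsubmx x); lra.
exists (fun x0 => \sum_i alpha blkz Mvz h b i * V i (x0 i)).
move=> w xi v z u Hxi Hz Hv Hu.
set A := fun i => alpha blkz Mvz h b i.
set G := fun i => gamma blkv blkz Mvz Mvw h b gR i.
have Hstep : forall t, sqnorm (u t) + \sum_i A i * V i (xi i t.+1)
    <= gR ^+ 2 * sqnorm (w t) + \sum_i A i * V i (xi i t).
  move=> t.
  have D : \sum_i A i * (V i (xi i t.+1) - V i (xi i t)) <=
     \sum_i A i * (G i ^+ 2 * sqnorm_blk blkv i (v t)
                   - sqnorm_blk blkz i (chi i (xi i t) (resv blkv i (v t)))).
    apply: ler_sum => i _; apply: ler_wpM2l; first exact: ltW.
    rewrite Hxi; exact: HVdiss.
  rewrite [X in _ <= X](eq_bigr (fun i => A i * G i ^+ 2 * sqnorm_blk blkv i (v t)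
                   - A i * sqnorm_blk blkz i (chi i (xi i t) (resv blkv i (v t)))))
    in D; last by move=> i _; rewrite mulrBr mulrA.
  rewrite sumrB in D.
  rewrite (eq_bigr (fun i => A i * V i (xi i t.+1) - A i * V i (xi i t))) in D;
    last by move=> i _; rewrite mulrBr.
  rewrite sumrB in D.
  have E1 : \sum_i A i * G i ^+ 2 * sqnorm_blk blkv i (v t) =
     \sum_k (alpha blkz Mvz h b (blkv k) * gamma blkv blkz Mvz Mvw h b gR (blkv k) ^+ 2)
           * (Mvz *m z t + Mvw *m w t) k 0 ^+ 2.
    rewrite -(part_sum _ _ _ blkv (fun k => (alpha blkz Mvz h b (blkv k) *
          gamma blkv blkz Mvz Mvw h b gR (blkv k) ^+ 2) * (Mvz *m z t + Mvw *m w t) k 0 ^+ 2)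
       (fun i k => A i * G i ^+ 2 * v t k 0 ^+ 2)).
      by apply: eq_bigr => i _; rewrite /sqnorm_blk mulr_sumr.
    by move=> k i <-; rewrite Hv.
  have E2 : \sum_i A i * sqnorm_blk blkz i (chi i (xi i t) (resv blkv i (v t))) =
     \sum_j alpha blkz Mvz h b (blkz j) * z t j 0 ^+ 2.
    rewrite -(part_sum _ _ _ blkz (fun j => alpha blkz Mvz h b (blkz j) * z t j 0 ^+ 2)
       (fun i j => A i * chi i (xi i t) (resv blkv i (v t)) j 0 ^+ 2)).
      by apply: eq_bigr => i _; rewrite /sqnorm_blk mulr_sumr.
    by move=> j i <-; rewrite Hz.
  have Eu : sqnorm (u t) = \sum_j h 0 j * z t j 0 ^+ 2.
    by rewrite sqnormE Hu trmx_mul -mulmxA (mulmxA Muz^T) HH mulmxA qdiag.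
  have := Hcore (z t) (w t).
  rewrite E1 E2 Eu /sqnorm in D *.
  rewrite /sqnorm.
  lra.
have Hind : forall T, \sum_(t < T) sqnorm (u t) + \sum_i A i * V i (xi i T)
    <= gR ^+ 2 * \sum_(t < T) sqnorm (w t) + \sum_i A i * V i (xi i 0%N).
  elim=> [|T IH]; first by rewrite !big_ord0 mulr0 !add0r.
  rewrite !big_ord_recr /=.
  have := Hstep T.
  lra.
move=> T.
have HVT : 0 <= \sum_i A i * V i (xi i T).
  by apply: sumr_ge0 => i _; apply: mulr_ge0; [exact: ltW | exact: HV0].
have := Hind T; rewrite /A; lra.
Qed.
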